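(* Let $P$ be a convex polytope in $\mathbb{R}^3$ with non-empty interior whose boundary admits a triangulation, using exactly the vertices of $P$ as vertices, that is combinatorially equivalent to the boundary of an octahedron (six vertices, each of degree $4$). Then $$\frac{S(P)^3}{V(P)^2}\geq 108\sqrt{3},$$ with equality if and only if $P$ is a regular octahedron.
   Context: $S(P)$ denotes the surface area and $V(P)$ the volume of $P$. *)

(* Defs.v *)
From Stdlib Require Import Reals Lra List.
Import ListNotations.
Open Scope R_scope.

Definition pt : Type := (R * R * R)%type.
Definition px (p : pt) : R := fst (fst p).
Definition py (p : pt) : R := snd (fst p).
Definition pz (p : pt) : R := snd p.
Definition mkpt (x y z : R) : pt := (x, y, z).
Definition origin : pt := mkpt 0 0 0.
Definition vadd (p q : pt) : pt := mkpt (px p + px q) (py p + py q) (pz p + pz q).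
Definition vsub (p q : pt) : pt := mkpt (px p - px q) (py p - py q) (pz p - pz q).
Definition vscale (t : R) (p : pt) : pt := mkpt (t * px p) (t * py p) (t * pz p).
Definition dot (p q : pt) : R := px p * px q + py p * py q + pz p * pz q.
Definition cross (p q : pt) : pt :=
  mkpt (py p * pz q - pz p * py q) (pz p * px q - px p * pz q) (px p * py q - py p * px q).
Definition vnorm (p : pt) : R := sqrt (dot p p).
Definition det3 (a b c : pt) : R := dot a (cross b c).

Definition lincomb (w : list R) (l : list pt) : pt :=
  fold_right (fun tp acc => vadd (vscale (fst tp) (snd tp)) acc) origin (combine w l).
Definition in_hull (l : list pt) (x : pt) : Prop :=
  exists w : list R, length w = length l /\ Forall (fun t => 0 <= t) w /\
    fold_right Rplus 0 w = 1 /\ x = lincomb w l.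

Definition interior_pt (S : pt -> Prop) (x : pt) : Prop :=
  exists eps, 0 < eps /\ forall y, vnorm (vsub y x) < eps -> S y.
Definition boundary_pt (S : pt -> Prop) (x : pt) : Prop :=
  S x /\ ~ interior_pt S x.
Definition extreme_pt (S : pt -> Prop) (x : pt) : Prop :=
  S x /\ forall a b t, S a -> S b -> 0 < t < 1 ->
    x = vadd (vscale t a) (vscale (1 - t) b) -> a = x /\ b = x.

(** The six vertices are v 0, ..., v 5; the combinatorial octahedron has
    antipodal (non-adjacent) pairs {0,1}, {2,3}, {4,5}, and its 8 faces
    (listed with a coherent orientation of the sphere) are the triangles
    taking one vertex from each pair. *)
Definition oct_idx : list nat := [0; 1; 2; 3; 4; 5]%nat.
Definition oct_faces : list (nat * nat * nat) :=
  [(0,2,4); (0,3,5); (1,2,5); (1,3,4); (0,5,2); (0,4,3); (1,4,2); (1,5,3)]%nat.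
Definition face_idx (f : nat * nat * nat) : list nat :=
  let '(a, b, c) := f in [a; b; c].
Definition verts (v : nat -> pt) : list pt := map v oct_idx.

Definition polyP (v : nat -> pt) : pt -> Prop := in_hull (verts v).

Definition face_tri (v : nat -> pt) (f : nat * nat * nat) : pt -> Prop :=
  in_hull (map v (face_idx f)).

Definition common_idx (f g : nat * nat * nat) : list nat :=
  filter (fun i => existsb (Nat.eqb i) (face_idx g)) (face_idx f).

Definition nonempty_interior (v : nat -> pt) : Prop :=
  exists x, interior_pt (polyP v) x.
Definition exactly_vertices (v : nat -> pt) : Prop :=
  (forall i j, In i oct_idx -> In j oct_idx -> v i = v j -> i = j) /\
  (forall x, extreme_pt (polyP v) x <-> exists i, In i oct_idx /\ x = v i).
Definition octahedral_boundary_triangulation (v : nat -> pt) : Prop :=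
  (forall f, In f oct_faces ->
     let '(a, b, c) := f in cross (vsub (v b) (v a)) (vsub (v c) (v a)) <> origin) /\
  (forall x, boundary_pt (polyP v) x <-> exists f, In f oct_faces /\ face_tri v f x) /\
  (forall f g, In f oct_faces -> In g oct_faces -> forall x,
     (face_tri v f x /\ face_tri v g x) <-> in_hull (map v (common_idx f g)) x).

Definition tri_area (a b c : pt) : R := vnorm (cross (vsub b a) (vsub c a)) / 2.
Definition surf_area (v : nat -> pt) : R :=
  fold_right Rplus 0 (map (fun f => let '(a, b, c) := f in tri_area (v a) (v b) (v c)) oct_faces).
Definition volume (v : nat -> pt) : R :=
  Rabs (fold_right Rplus 0 (map (fun f => let '(a, b, c) := f in det3 (v a) (v b) (v c)) oct_faces)) / 6.

Definition is_regular_octahedron (P : pt -> Prop) : Prop :=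
  exists (c u1 u2 u3 : pt) (r : R), 0 < r /\
    dot u1 u1 = 1 /\ dot u2 u2 = 1 /\ dot u3 u3 = 1 /\
    dot u1 u2 = 0 /\ dot u1 u3 = 0 /\ dot u2 u3 = 0 /\
    forall x, P x <-> in_hull
      [vadd c (vscale r u1); vsub c (vscale r u1);
       vadd c (vscale r u2); vsub c (vscale r u2);
       vadd c (vscale r u3); vsub c (vscale r u3)] x.

(* Main.v *)
Require Import Defs.
From Stdlib Require Import Reals List Lra Lia Psatz.
Import ListNotations.
Open Scope R_scope.

Ltac unf := unfold origin, det3, dot, cross, vadd, vsub, vscale, mkpt, px, py, pz in *; cbn [fst snd] in *.

Lemma pt_eq (p q : pt) : px p = px q -> py p = py q -> pz p = pz q -> p = q.
Proof. destruct p as [[a b] c], q as [[d e] f]; unfold px,py,pz; simpl; intros; subst; reflexivity. Qed.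

Lemma pt_eq_inv (p q : pt) : p = q -> px p = px q /\ py p = py q /\ pz p = pz q.
Proof. intros ->; auto. Qed.

Lemma dot_ge0 p : 0 <= dot p p.
Proof. unf; nra. Qed.

Lemma dot_pos p : p <> origin -> 0 < dot p p.
Proof. intros H. destruct (Rlt_or_le 0 (dot p p)) as [h|h]; auto.
  exfalso; apply H. assert (dot p p = 0) by (pose proof (dot_ge0 p); lra).
  unf. apply pt_eq; unf; nra. Qed.

Lemma dot_zero p : dot p p = 0 -> p = origin.
Proof. intros H. apply pt_eq; unf; nra. Qed.

Lemma vsub_pos p q : p <> q -> 0 < dot (vsub p q) (vsub p q).
Proof. intros H; apply dot_pos; intro E; apply H. apply pt_eq_inv in E; destruct E as [E1 [E2 E3]]; unf. apply pt_eq; unf; lra. Qed.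

Lemma dot_comm a b : dot a b = dot b a. Proof. unf; ring. Qed.
Lemma dot_vsub_l a b c : dot (vsub a b) c = dot a c - dot b c. Proof. unf; ring. Qed.
Lemma dot_vadd_l a b c : dot (vadd a b) c = dot a c + dot b c. Proof. unf; ring. Qed.
Lemma dot_vscale_l k a c : dot (vscale k a) c = k * dot a c. Proof. unf; ring. Qed.
Lemma dot_vsub_r a b c : dot c (vsub a b) = dot c a - dot c b. Proof. unf; ring. Qed.
Lemma dot_vadd_r a b c : dot c (vadd a b) = dot c a + dot c b. Proof. unf; ring. Qed.
Lemma dot_vscale_r k a c : dot c (vscale k a) = k * dot c a. Proof. unf; ring. Qed.

Lemma lagrange a b : dot (cross a b) (cross a b) = dot a a * dot b b - dot a b ^ 2.
Proof. unf; ring. Qed.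

Lemma vnorm_ge0 p : 0 <= vnorm p. Proof. apply sqrt_pos. Qed.

Lemma vnorm_sq p : vnorm p * vnorm p = dot p p.
Proof. unfold vnorm; apply sqrt_sqrt, dot_ge0. Qed.

Lemma cs a b : dot a b <= vnorm a * vnorm b.
Proof.
  destruct (Rle_or_lt (dot a b) 0) as [h|h].
  - pose proof (vnorm_ge0 a); pose proof (vnorm_ge0 b); nra.
  - pose proof (lagrange a b). pose proof (dot_ge0 (cross a b)).
    unfold vnorm. rewrite <- sqrt_mult by apply dot_ge0.
    rewrite <- (sqrt_pow2 (dot a b)) by lra.
    apply sqrt_le_1_alt. lra.
Qed.

Lemma cs_eq_perp a b d : dot a b = vnorm a * vnorm b -> 0 < dot a a -> 0 < dot b b ->
  dot d a = 0 -> dot d b = 0.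
Proof.
  intros H Ha Hb Hd.
  assert (E : dot a b ^ 2 = dot a a * dot b b).
  { rewrite H, <- !vnorm_sq. ring. }
  pose proof (lagrange a b) as L. rewrite E in L.
  assert (Z : cross a b = origin) by (apply dot_zero; lra).
  assert (Id : dot b b * dot d a - dot a b * dot d b = - dot (cross a b) (cross b d)) by (unf; ring).
  rewrite Z in Id. assert (O : dot origin (cross b d) = 0) by (unf; ring). rewrite O in Id.
  assert (P : 0 < dot a b).
  { rewrite H. assert (0 < vnorm a) by (unfold vnorm; apply sqrt_lt_R0; lra).
    assert (0 < vnorm b) by (unfold vnorm; apply sqrt_lt_R0; lra). nra. }
  rewrite Hd in Id. assert (dot a b * dot d b = 0) by lra.
  destruct (Rmult_integral _ _ H0); lra.
Qed.

Lemma lincomb_cons t w p l : lincomb (t :: w) (p :: l) = vadd (vscale t p) (lincomb w l).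
Proof. reflexivity. Qed.

Lemma lincomb_nil_l l : lincomb [] l = origin. Proof. reflexivity. Qed.
Lemma lincomb_nil_r w : lincomb w [] = origin. Proof. destruct w; reflexivity. Qed.

Definition sumR (w : list R) := fold_right Rplus 0 w.

Lemma hull_nil x : ~ in_hull [] x.
Proof. intros [w [Hl [Hf [Hs _]]]]. destruct w; simpl in *; try discriminate. lra. Qed.

Lemma lincomb_zero w l : Forall (fun t => 0 <= t) w -> fold_right Rplus 0 w = 0 -> lincomb w l = origin.
Proof.
  revert l; induction w as [|t w IH]; intros l Hf Hs.
  - reflexivity.
  - destruct l as [|p l]; [reflexivity|]. inversion Hf; subst. simpl in Hs.
    assert (0 <= fold_right Rplus 0 w).
    { clear -H2. induction w; simpl; [lra|]. inversion H2; subst. specialize (IHw H3). lra. }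
    rewrite lincomb_cons, IH; auto; try lra.
    assert (t = 0) by lra. subst. apply pt_eq; unf; ring.
Qed.

Lemma sum_nonneg w : Forall (fun t => 0 <= t) w -> 0 <= fold_right Rplus 0 w.
Proof. induction w; simpl; intros H; [lra|]. inversion H; subst. specialize (IHw H3). lra. Qed.

Lemma hull_cons q l x : in_hull l x -> in_hull (q :: l) x.
Proof.
  intros [w [Hl [Hf [Hs Hx]]]]. exists (0 :: w). simpl. repeat split; auto.
  - constructor; auto; lra.
  - lra.
  - rewrite Hx. destruct l; destruct w; try (simpl in Hl; discriminate).
    + simpl in Hs. lra.
    + apply pt_eq; unfold lincomb; simpl; unf; ring.
Qed.

Lemma zeros_lincomb n l : lincomb (repeat 0 n) l = origin.
Proof. apply lincomb_zero. induction n; simpl; constructor; auto; lra.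
  induction n; simpl; lra. Qed.

Lemma hull_head q l : in_hull (q :: l) q.
Proof.
  exists (1 :: repeat 0 (length l)). simpl. repeat split.
  - rewrite repeat_length; auto.
  - constructor; [lra|]. induction (length l); simpl; constructor; auto; lra.
  - assert (fold_right Rplus 0 (repeat 0 (length l)) = 0) by (induction (length l); simpl; lra). lra.
  - rewrite lincomb_cons, zeros_lincomb. apply pt_eq; unf; ring.
Qed.

Lemma hull_mem p l : In p l -> in_hull l p.
Proof.
  induction l as [|q l IH]; simpl; [tauto|]. intros [->|H].
  - apply hull_head.
  - apply hull_cons, IH, H.
Qed.

Lemma hull_dot_le_gen a M l : Forall (fun p => dot a p <= M) l ->
  forall w, length w = length l -> Forall (fun t => 0 <= t) w ->
  dot a (lincomb w l) <= fold_right Rplus 0 w * M.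
Proof.
  induction l as [|p l IH]; intros Hl w Hw Hf.
  - destruct w; simpl in Hw; try discriminate. rewrite lincomb_nil_l. simpl. unf. lra.
  - destruct w as [|t w]; simpl in Hw; try discriminate.
    inversion Hl; inversion Hf; subst.
    rewrite lincomb_cons, dot_vadd_r, dot_vscale_r. simpl.
    specialize (IH H2 w ltac:(lia) H6). nra.
Qed.

Lemma hull_dot_le a M l x : Forall (fun p => dot a p <= M) l -> in_hull l x -> dot a x <= M.
Proof.
  intros H [w [Hl [Hf [Hs Hx]]]]. subst x.
  pose proof (hull_dot_le_gen a M l H w Hl Hf). rewrite Hs in H0. lra.
Qed.

Lemma lincomb_scale k w l : lincomb (map (fun s => k * s) w) l = vscale k (lincomb w l).
Proof.
  revert l; induction w as [|t w IH]; intros l.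
  - apply pt_eq; unfold lincomb; simpl; unf; ring.
  - destruct l as [|p l].
    + apply pt_eq; unfold lincomb; simpl; unf; ring.
    + simpl map. rewrite !lincomb_cons, IH. apply pt_eq; unf; ring.
Qed.

Lemma sum_scale k w : fold_right Rplus 0 (map (fun s => k * s) w) = k * fold_right Rplus 0 w.
Proof. induction w; simpl; [ring|]. rewrite IHw; ring. Qed.

Lemma hull_extreme_in l : forall x, in_hull l x ->
  (forall a b t, in_hull l a -> in_hull l b -> 0 < t < 1 ->
     x = vadd (vscale t a) (vscale (1 - t) b) -> a = x) -> In x l.
Proof.
  induction l as [|q l IH]; intros x Hx Hext.
  - exfalso; exact (hull_nil x Hx).
  - destruct Hx as [w [Hl [Hf [Hs Hxe]]]].
    destruct w as [|t w]; simpl in Hl; try discriminate.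
    apply Forall_cons_iff in Hf; destruct Hf as [Ht H2]. simpl in Hs. rewrite lincomb_cons in Hxe.
    pose proof (sum_nonneg w H2) as Hsw.
    destruct (Req_dec t 1) as [E1|N1].
    + left. subst t. rewrite lincomb_zero in Hxe by (auto; lra).
      rewrite Hxe. apply pt_eq; unf; ring.
    + destruct (Req_dec t 0) as [E0|N0].
      * right. subst t. apply IH.
        { exists w. repeat split; auto; try lia; try lra. rewrite Hxe. apply pt_eq; unf; ring. }
        intros a b t' Ha Hb Ht' Hx'. apply (Hext a b t'); auto using hull_cons.
      * left. assert (Tlt : 0 < t < 1) by (destruct (Rtotal_order t 1) as [?|[?|?]]; destruct (Rtotal_order t 0) as [?|[?|?]]; try lra).
        apply (Hext q (lincomb (map (fun s => / (1 - t) * s) w) l) t).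
        -- apply hull_head.
        -- apply hull_cons. exists (map (fun s => / (1 - t) * s) w). repeat split.
           ++ rewrite length_map. lia.
           ++ apply Forall_map. eapply Forall_impl; [|exact H2]. intros s Hs'.
              simpl. apply Rmult_le_pos; auto. left; apply Rinv_0_lt_compat; lra.
           ++ rewrite sum_scale. field_simplify; [|lra]. replace (fold_right Rplus 0 w) with (1 - t) by lra. field. lra.
        -- lra.
        -- rewrite lincomb_scale, Hxe. apply pt_eq; unf; field; lra.
Qed.

Definition tri_hull (A B C x : pt) : Prop :=
  exists a b c, 0 <= a /\ 0 <= b /\ 0 <= c /\ a + b + c = 1 /\
    px x = a * px A + b * px B + c * px C /\
    py x = a * py A + b * py B + c * py C /\
    pz x = a * pz A + b * pz B + c * pz C.

Lemma in_hull3 A B C x : in_hull [A; B; C] x <-> tri_hull A B C x.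
Proof.
  split.
  - intros [w [Hl [Hf [Hs Hx]]]].
    destruct w as [|a [|b [|c [|d w]]]]; simpl in Hl; try discriminate.
    apply Forall_cons_iff in Hf; destruct Hf as [Ha Hf1].
    apply Forall_cons_iff in Hf1; destruct Hf1 as [Hb Hf2].
    apply Forall_cons_iff in Hf2; destruct Hf2 as [Hc _].
    simpl in Hs. exists a, b, c. unfold lincomb in Hx; simpl in Hx.
    apply pt_eq_inv in Hx. destruct Hx as [H1 [H2 H3]]. unf.
    repeat split; auto; lra.
  - intros [a [b [c [Ha [Hb [Hc [Hs [H1 [H2 H3]]]]]]]]].
    exists [a; b; c]. split; [reflexivity|]. split; [constructor; [assumption|]; constructor; [assumption|]; constructor; [assumption|]; constructor|].
    split; [simpl; lra|]. unfold lincomb; simpl. apply pt_eq; unf; lra.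
Qed.

Lemma tri_perm12 A B C x : tri_hull A B C x -> tri_hull B A C x.
Proof. intros [a [b [c H]]]. exists b, a, c. intuition lra. Qed.
Lemma tri_perm23 A B C x : tri_hull A B C x -> tri_hull A C B x.
Proof. intros [a [b [c H]]]. exists a, c, b. intuition lra. Qed.

Lemma tri_mid12 A B C : tri_hull A B C (vscale (1/2) (vadd A B)).
Proof. exists (1/2), (1/2), 0. unf. repeat split; lra. Qed.
Lemma tri_vert1 A B C : tri_hull A B C A.
Proof. exists 1, 0, 0. repeat split; lra. Qed.

Section Frame.
Variables e1 e2 : pt.
Hypothesis H11 : dot e1 e1 = 1.
Hypothesis H22 : dot e2 e2 = 1.
Hypothesis H12 : dot e1 e2 = 0.

Lemma frame_parseval x y : dot x y = dot x e1 * dot y e1 + dot x e2 * dot y e2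
   + dot x (cross e1 e2) * dot y (cross e1 e2).
Proof.
  assert (Id : dot x (cross e1 e2) * dot y (cross e1 e2) =
    dot x y * (dot e1 e1 * dot e2 e2 - dot e1 e2 * dot e1 e2)
    - dot x e1 * (dot y e1 * dot e2 e2 - dot e1 e2 * dot y e2)
    + dot x e2 * (dot y e1 * dot e1 e2 - dot e1 e1 * dot y e2)) by (unf; ring).
  rewrite H11, H22, H12 in Id. lra.
Qed.

Lemma e3_unit : dot (cross e1 e2) (cross e1 e2) = 1.
Proof. rewrite lagrange, H11, H22, H12. ring. Qed.
Lemma e13 : dot e1 (cross e1 e2) = 0. Proof. unf; ring. Qed.
Lemma e23 : dot e2 (cross e1 e2) = 0. Proof. unf; ring. Qed.

Lemma frame_zero z : dot z e1 = 0 -> dot z e2 = 0 -> dot z (cross e1 e2) = 0 -> z = origin.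
Proof.
  intros A1 A2 A3. apply dot_zero. rewrite (frame_parseval z z), A1, A2, A3. ring.
Qed.
End Frame.

Lemma det3_pos_nonzero c1 c2 c3 : det3 c1 c2 c3 <> 0 -> 0 < dot c1 c1.
Proof.
  intros H. destruct (Rlt_or_le 0 (dot c1 c1)) as [h|h]; auto.
  exfalso. apply H. assert (E : c1 = origin) by (apply dot_zero; pose proof (dot_ge0 c1); lra).
  subst. unf. ring.
Qed.

Lemma GS c1 c2 c3 : 0 < det3 c1 c2 c3 ->
  exists e1 e2, dot e1 e1 = 1 /\ dot e2 e2 = 1 /\ dot e1 e2 = 0 /\
    0 < dot c1 e1 /\ 0 < dot c2 e2 /\ 0 < dot c3 (cross e1 e2) /\
    dot c1 e1 * dot c2 e2 * dot c3 (cross e1 e2) = det3 c1 c2 c3.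
Proof.
  intros Hd.
  assert (n1p : 0 < dot c1 c1) by (apply (det3_pos_nonzero c1 c2 c3); lra).
  set (k := dot c2 c1 / dot c1 c1).
  set (p := vsub c2 (vscale k c1)).
  assert (pc1 : dot p c1 = 0).
  { unfold p. rewrite dot_vsub_l, dot_vscale_l. unfold k. field. lra. }
  assert (detp : det3 c1 p c3 = det3 c1 c2 c3) by (unfold p; unf; ring).
  assert (n2p : 0 < dot p p).
  { destruct (Rlt_or_le 0 (dot p p)) as [h|h]; auto.
    assert (E : p = origin) by (apply dot_zero; pose proof (dot_ge0 p); lra).
    rewrite E in detp. unf. lra. }
  set (s1 := sqrt (dot c1 c1)). set (s2 := sqrt (dot p p)).
  assert (s1p : 0 < s1) by (apply sqrt_lt_R0; lra).
  assert (s2p : 0 < s2) by (apply sqrt_lt_R0; lra).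
  assert (s1s : s1 * s1 = dot c1 c1) by (apply sqrt_sqrt; lra).
  assert (s2s : s2 * s2 = dot p p) by (apply sqrt_sqrt; lra).
  exists (vscale (/ s1) c1), (vscale (/ s2) p).
  assert (c2p : dot c2 p = dot p p).
  { unfold p at 2. rewrite dot_vsub_l, dot_vscale_l, (dot_comm c1 p), pc1.
    rewrite dot_comm. ring. }
  assert (X : dot c3 (cross (vscale (/ s1) c1) (vscale (/ s2) p)) = / s1 * / s2 * det3 c1 c2 c3).
  { rewrite <- detp. unf. ring. }
  rewrite X. rewrite !dot_vscale_l, !dot_vscale_r.
  rewrite (dot_comm c1 p), pc1, c2p.
  repeat split.
  - rewrite <- s1s. field. lra.
  - rewrite <- s2s. field. lra.
  - ring.
  - rewrite <- s1s. apply Rmult_lt_0_compat; [apply Rinv_0_lt_compat; lra|nra].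
  - rewrite <- s2s. apply Rmult_lt_0_compat; [apply Rinv_0_lt_compat; lra|nra].
  - apply Rmult_lt_0_compat; [|lra]. apply Rmult_lt_0_compat; apply Rinv_0_lt_compat; lra.
  - rewrite <- s1s, <- s2s. field. lra.
Qed.

Definition Nf (v : nat -> pt) (a b c : nat) : pt := cross (vsub (v b) (v a)) (vsub (v c) (v a)).
Definition uf (e1 e2 e3 : pt) (s1 s2 s3 : R) : pt :=
  vadd (vadd (vscale s1 e1) (vscale s2 e2)) (vscale s3 e3).
Definition dd1 v := vsub (v 0%nat) (v 1%nat).
Definition dd2 v := vsub (v 2%nat) (v 3%nat).
Definition dd3 v := vsub (v 4%nat) (v 5%nat).
Definition Dv v := det3 (dd1 v) (dd2 v) (dd3 v).
Definition cc1 v := cross (dd2 v) (dd3 v).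
Definition cc2 v := cross (dd3 v) (dd1 v).
Definition cc3 v := cross (dd1 v) (dd2 v).

Lemma surf_eq v : surf_area v =
  (vnorm (Nf v 0 2 4) + vnorm (Nf v 0 3 5) + vnorm (Nf v 1 2 5) + vnorm (Nf v 1 3 4)
 + vnorm (Nf v 0 5 2) + vnorm (Nf v 0 4 3) + vnorm (Nf v 1 4 2) + vnorm (Nf v 1 5 3)) / 2.
Proof. unfold surf_area, tri_area, Nf; simpl. lra. Qed.

Lemma vol_eq v : volume v = Rabs (Dv v) / 6.
Proof. unfold volume, Dv, dd1, dd2, dd3; simpl. f_equal. f_equal. unf. ring. Qed.

Lemma detc v : det3 (cc1 v) (cc2 v) (cc3 v) = Dv v ^ 2.
Proof. unfold cc1, cc2, cc3, Dv, dd1, dd2, dd3. unf. ring. Qed.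

Lemma key_sum v e1 e2 e3 :
  dot (Nf v 0 2 4) (uf e1 e2 e3 1 1 1) + dot (Nf v 0 3 5) (uf e1 e2 e3 1 (-1) (-1))
+ dot (Nf v 1 2 5) (uf e1 e2 e3 (-1) 1 (-1)) + dot (Nf v 1 3 4) (uf e1 e2 e3 (-1) (-1) 1)
+ dot (Nf v 0 5 2) (uf e1 e2 e3 1 1 (-1)) + dot (Nf v 0 4 3) (uf e1 e2 e3 1 (-1) 1)
+ dot (Nf v 1 4 2) (uf e1 e2 e3 (-1) 1 1) + dot (Nf v 1 5 3) (uf e1 e2 e3 (-1) (-1) (-1))
= 2 * (dot (cc1 v) e1 + dot (cc2 v) e2 + dot (cc3 v) e3).
Proof. unfold Nf, uf, cc1, cc2, cc3, dd1, dd2, dd3. unf. ring. Qed.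

Section Ineq.
Variables e1 e2 : pt.
Hypothesis H11 : dot e1 e1 = 1.
Hypothesis H22 : dot e2 e2 = 1.
Hypothesis H12 : dot e1 e2 = 0.
Local Notation e3 := (cross e1 e2).

Lemma uf_norm2 s1 s2 s3 : s1 * s1 = 1 -> s2 * s2 = 1 -> s3 * s3 = 1 ->
  dot (uf e1 e2 e3 s1 s2 s3) (uf e1 e2 e3 s1 s2 s3) = 3.
Proof.
  intros S1 S2 S3. pose proof (e3_unit e1 e2 H11 H22 H12) as U3.
  assert (A13 : dot e1 e3 = 0) by (unf; ring).
  assert (A23 : dot e2 e3 = 0) by (unf; ring).
  unfold uf. rewrite !dot_vadd_l, !dot_vadd_r, !dot_vscale_l, !dot_vscale_r.
  rewrite (dot_comm e2 e1), (dot_comm e3 e1), (dot_comm e3 e2), H11, H22, H12, U3, A13, A23.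
  nra.
Qed.

Lemma uf_vnorm s1 s2 s3 : s1 * s1 = 1 -> s2 * s2 = 1 -> s3 * s3 = 1 ->
  vnorm (uf e1 e2 e3 s1 s2 s3) = sqrt 3.
Proof. intros. unfold vnorm. rewrite uf_norm2; auto. Qed.

Lemma face_bound s1 s2 s3 N : s1 * s1 = 1 -> s2 * s2 = 1 -> s3 * s3 = 1 ->
  dot N (uf e1 e2 e3 s1 s2 s3) <= vnorm N * sqrt 3.
Proof. intros. rewrite <- (uf_vnorm s1 s2 s3); auto. apply cs. Qed.

Definition Tv v := dot (cc1 v) e1 + dot (cc2 v) e2 + dot (cc3 v) e3.

Lemma ineq_T v : Tv v <= sqrt 3 * surf_area v.
Proof.
  pose proof (key_sum v e1 e2 e3) as K. rewrite surf_eq. unfold Tv.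
  assert (o : 1 * 1 = 1) by ring. assert (m : -1 * -1 = 1) by ring.
  pose proof (face_bound _ _ _ (Nf v 0 2 4) o o o).
  pose proof (face_bound _ _ _ (Nf v 0 3 5) o m m).
  pose proof (face_bound _ _ _ (Nf v 1 2 5) m o m).
  pose proof (face_bound _ _ _ (Nf v 1 3 4) m m o).
  pose proof (face_bound _ _ _ (Nf v 0 5 2) o o m).
  pose proof (face_bound _ _ _ (Nf v 0 4 3) o m o).
  pose proof (face_bound _ _ _ (Nf v 1 4 2) m o o).
  pose proof (face_bound _ _ _ (Nf v 1 5 3) m m m).
  lra.
Qed.

Lemma eq_T v : Tv v = sqrt 3 * surf_area v ->
  let E N s1 s2 s3 := dot N (uf e1 e2 e3 s1 s2 s3) = vnorm N * sqrt 3 in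
  E (Nf v 0 2 4) 1 1 1 /\ E (Nf v 0 3 5) 1 (-1) (-1) /\ E (Nf v 1 2 5) (-1) 1 (-1) /\
  E (Nf v 1 3 4) (-1) (-1) 1 /\ E (Nf v 0 5 2) 1 1 (-1) /\ E (Nf v 0 4 3) 1 (-1) 1 /\
  E (Nf v 1 4 2) (-1) 1 1 /\ E (Nf v 1 5 3) (-1) (-1) (-1).
Proof.
  intros HT E. unfold E.
  pose proof (key_sum v e1 e2 e3) as K. rewrite surf_eq in HT. unfold Tv in HT.
  assert (o : 1 * 1 = 1) by ring. assert (m : -1 * -1 = 1) by ring.
  pose proof (face_bound _ _ _ (Nf v 0 2 4) o o o).
  pose proof (face_bound _ _ _ (Nf v 0 3 5) o m m).
  pose proof (face_bound _ _ _ (Nf v 1 2 5) m o m).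
  pose proof (face_bound _ _ _ (Nf v 1 3 4) m m o).
  pose proof (face_bound _ _ _ (Nf v 0 5 2) o o m).
  pose proof (face_bound _ _ _ (Nf v 0 4 3) o m o).
  pose proof (face_bound _ _ _ (Nf v 1 4 2) m o o).
  pose proof (face_bound _ _ _ (Nf v 1 5 3) m m m).
  repeat split; lra.
Qed.

End Ineq.

Definition RegP (v : nat -> pt) : Prop :=
  exists c a b e, v 0%nat = vadd c a /\ v 1%nat = vsub c a /\ v 2%nat = vadd c b /\
    v 3%nat = vsub c b /\ v 4%nat = vadd c e /\ v 5%nat = vsub c e /\
    dot a b = 0 /\ dot a e = 0 /\ dot b e = 0 /\ dot b b = dot a a /\ dot e e = dot a a /\
    0 < dot a a.

Section Eq.
Variables e1 e2 : pt.
Hypothesis H11 : dot e1 e1 = 1.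
Hypothesis H22 : dot e2 e2 = 1.
Hypothesis H12 : dot e1 e2 = 0.
Local Notation e3 := (cross e1 e2).

Lemma dot_uf_sub p q s1 s2 s3 : dot (vsub p q) (uf e1 e2 e3 s1 s2 s3) =
  s1 * (dot p e1 - dot q e1) + s2 * (dot p e2 - dot q e2) + s3 * (dot p e3 - dot q e3).
Proof. unfold uf. unf. ring. Qed.

Lemma face_perp v a b c s1 s2 s3 : s1 * s1 = 1 -> s2 * s2 = 1 -> s3 * s3 = 1 ->
  0 < dot (Nf v a b c) (Nf v a b c) ->
  dot (Nf v a b c) (uf e1 e2 e3 s1 s2 s3) = vnorm (Nf v a b c) * sqrt 3 ->
  s1 * (dot (v b) e1 - dot (v a) e1) + s2 * (dot (v b) e2 - dot (v a) e2) + s3 * (dot (v b) e3 - dot (v a) e3) = 0 /\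
  s1 * (dot (v c) e1 - dot (v a) e1) + s2 * (dot (v c) e2 - dot (v a) e2) + s3 * (dot (v c) e3 - dot (v a) e3) = 0.
Proof.
  intros S1 S2 S3 Hn He.
  rewrite <- (uf_vnorm e1 e2 H11 H22 H12 s1 s2 s3 S1 S2 S3) in He.
  pose proof (uf_norm2 e1 e2 H11 H22 H12 s1 s2 s3 S1 S2 S3) as U.
  split; rewrite <- dot_uf_sub; apply (cs_eq_perp _ _ _ He Hn); try lra; unfold Nf; unf; ring.
Qed.

Definition FP v (a b c : nat) s1 s2 s3 :=
   s1 * (dot (v b) e1 - dot (v a) e1) + s2 * (dot (v b) e2 - dot (v a) e2) + s3 * (dot (v b) e3 - dot (v a) e3) = 0 /\
   s1 * (dot (v c) e1 - dot (v a) e1) + s2 * (dot (v c) e2 - dot (v a) e2) + s3 * (dot (v c) e3 - dot (v a) e3) = 0.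

Lemma frame_eq p q : dot p e1 = dot q e1 -> dot p e2 = dot q e2 -> dot p e3 = dot q e3 -> p = q.
Proof.
  intros A1 A2 A3. assert (Z : vsub p q = origin).
  { apply (frame_zero e1 e2 H11 H22 H12); rewrite dot_vsub_l; lra. }
  apply pt_eq_inv in Z. destruct Z as [Z1 [Z2 Z3]]. apply pt_eq; unf; lra.
Qed.

Ltac lin := repeat (rewrite ?dot_vsub_l, ?dot_vadd_l, ?dot_vscale_l).

Lemma coords_reg v :
  FP v 0 2 4 1 1 1 -> FP v 0 3 5 1 (-1) (-1) -> FP v 1 2 5 (-1) 1 (-1) -> FP v 1 3 4 (-1) (-1) 1 ->
  FP v 0 5 2 1 1 (-1) -> FP v 0 4 3 1 (-1) 1 -> FP v 1 4 2 (-1) 1 1 -> FP v 1 5 3 (-1) (-1) (-1) ->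
  v 0%nat <> v 1%nat ->
  RegP v.
Proof.
  unfold FP. intros F1 F2 F3 F4 F5 F6 F7 F8 N01.
  set (l := dot (v 2%nat) e1 - dot (v 0%nat) e1).
  assert (R11 : dot (v 1%nat) e1 = dot (v 0%nat) e1 + 2 * l) by (unfold l; lra).
  assert (R12 : dot (v 1%nat) e2 = dot (v 0%nat) e2) by lra.
  assert (R13 : dot (v 1%nat) e3 = dot (v 0%nat) e3) by lra.
  assert (R21 : dot (v 2%nat) e1 = dot (v 0%nat) e1 + l) by (unfold l; lra).
  assert (R22 : dot (v 2%nat) e2 = dot (v 0%nat) e2 - l) by (unfold l; lra).
  assert (R23 : dot (v 2%nat) e3 = dot (v 0%nat) e3) by lra.
  assert (R31 : dot (v 3%nat) e1 = dot (v 0%nat) e1 + l) by (unfold l; lra).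
  assert (R32 : dot (v 3%nat) e2 = dot (v 0%nat) e2 + l) by (unfold l; lra).
  assert (R33 : dot (v 3%nat) e3 = dot (v 0%nat) e3) by lra.
  assert (R41 : dot (v 4%nat) e1 = dot (v 0%nat) e1 + l) by (unfold l; lra).
  assert (R42 : dot (v 4%nat) e2 = dot (v 0%nat) e2) by (unfold l; lra).
  assert (R43 : dot (v 4%nat) e3 = dot (v 0%nat) e3 - l) by (unfold l; lra).
  assert (R51 : dot (v 5%nat) e1 = dot (v 0%nat) e1 + l) by (unfold l; lra).
  assert (R52 : dot (v 5%nat) e2 = dot (v 0%nat) e2) by (unfold l; lra).
  assert (R53 : dot (v 5%nat) e3 = dot (v 0%nat) e3 + l) by (unfold l; lra).
  clearbody l.
  set (c := vscale (1/2) (vadd (v 0%nat) (v 1%nat))).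
  exists c, (vsub (v 0%nat) c), (vsub (v 2%nat) c), (vsub (v 4%nat) c).
  assert (lnz : l <> 0).
  { intro L0. apply N01. apply frame_eq; lra. }
  assert (P : forall x y, dot x y = dot x e1 * dot y e1 + dot x e2 * dot y e2 + dot x e3 * dot y e3)
    by (intros; apply frame_parseval; auto).
  unfold c. repeat split.
  - apply pt_eq; unf; lra.
  - apply pt_eq; unf; lra.
  - apply pt_eq; unf; lra.
  - apply frame_eq; lin; lra.
  - apply pt_eq; unf; lra.
  - apply frame_eq; lin; lra.
  - rewrite P. lin. rewrite R11, R12, R13, R21, R22, R23. field.
  - rewrite P. lin. rewrite R11, R12, R13, R41, R42, R43. field.
  - rewrite P. lin. rewrite R11, R12, R13, R21, R22, R23, R41, R42, R43. field.
  - rewrite (P (vsub (v 2%nat) _)), (P (vsub (v 0%nat) _)). lin. rewrite R11, R12, R13, R21, R22, R23. field.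
  - rewrite (P (vsub (v 4%nat) _)), (P (vsub (v 0%nat) _)). lin. rewrite R11, R12, R13, R41, R42, R43. field.
  - rewrite P. lin. rewrite R11, R12, R13. 
    replace (dot (v 0%nat) e1 - 1 / 2 * (dot (v 0%nat) e1 + (dot (v 0%nat) e1 + 2 * l))) with (- l) by field.
    replace (dot (v 0%nat) e2 - 1 / 2 * (dot (v 0%nat) e2 + dot (v 0%nat) e2)) with 0 by field.
    replace (dot (v 0%nat) e3 - 1 / 2 * (dot (v 0%nat) e3 + dot (v 0%nat) e3)) with 0 by field.
    assert (0 < l * l) by (destruct (Rlt_or_le 0 l); [nra|]; destruct (Req_dec l 0); [tauto|nra]). nra.
Qed.
End Eq.

Lemma reg_is_regular v : RegP v -> is_regular_octahedron (polyP v).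
Proof.
  intros [c [a [b [e [V0 [V1 [V2 [V3 [V4 [V5 [Hab [Hae [Hbe [Hbb [Hee Haa]]]]]]]]]]]]]]].
  set (r := sqrt (dot a a)).
  assert (rp : 0 < r) by (apply sqrt_lt_R0; lra).
  assert (rr : r * r = dot a a) by (apply sqrt_sqrt; lra).
  exists c, (vscale (/ r) a), (vscale (/ r) b), (vscale (/ r) e), r.
  rewrite !dot_vscale_l, !dot_vscale_r, Hab, Hae, Hbe, Hbb, Hee.
  repeat split; try (field_simplify; [|lra]); try lra.
  - rewrite <- rr. field. lra.
  - rewrite <- rr. field. lra.
  - rewrite <- rr. field. lra.
  - assert (K : forall u, vscale r (vscale (/ r) u) = u) by (intros; apply pt_eq; unf; field; lra).
    unfold polyP, verts, oct_idx. simpl map. rewrite !K, <- V0, <- V1, <- V2, <- V3, <- V4, <- V5. auto.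
  - assert (K : forall u, vscale r (vscale (/ r) u) = u) by (intros; apply pt_eq; unf; field; lra).
    unfold polyP, verts, oct_idx. simpl map. rewrite !K, <- V0, <- V1, <- V2, <- V3, <- V4, <- V5. auto.
Qed.

Lemma tri_reg c x y z rho : dot x y = 0 -> dot x z = 0 -> dot y z = 0 ->
  dot x x = rho -> dot y y = rho -> dot z z = rho -> 0 <= rho ->
  tri_area (vadd c x) (vadd c y) (vadd c z) = sqrt 3 * rho / 2.
Proof.
  intros Hxy Hxz Hyz Hx Hy Hz Hr. unfold tri_area, vnorm.
  assert (Id : dot (cross (vsub (vadd c y) (vadd c x)) (vsub (vadd c z) (vadd c x)))
                   (cross (vsub (vadd c y) (vadd c x)) (vsub (vadd c z) (vadd c x))) =
     (dot y y - 2 * dot x y + dot x x) * (dot z z - 2 * dot x z + dot x x)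
     - (dot y z - dot x y - dot x z + dot x x) ^ 2) by (unf; ring).
  rewrite Id, Hxy, Hxz, Hyz, Hx, Hy, Hz.
  replace ((rho - 2 * 0 + rho) * (rho - 2 * 0 + rho) - (0 - 0 - 0 + rho) ^ 2) with (3 * rho ^ 2) by ring.
  rewrite sqrt_mult_alt by lra. rewrite sqrt_pow2 by lra. lra.
Qed.

Lemma reg_ratio v : RegP v -> surf_area v ^ 3 / volume v ^ 2 = 108 * sqrt 3.
Proof.
  intros [c [a [b [e [V0 [V1 [V2 [V3 [V4 [V5 [Hab [Hae [Hbe [Hbb [Hee Haa]]]]]]]]]]]]]]].
  set (rho := dot a a).
  assert (S1 : forall u, vsub c u = vadd c (vscale (-1) u)) by (intros; apply pt_eq; unf; ring).
  assert (Hs : surf_area v = 4 * sqrt 3 * rho).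
  { unfold surf_area; simpl. rewrite V0, V1, V2, V3, V4, V5, !S1.
    assert (N : forall p q, dot (vscale (-1) p) q = - dot p q) by (intros; unf; ring).
    assert (N' : forall p q, dot p (vscale (-1) q) = - dot p q) by (intros; unf; ring).
    assert (N'' : forall p, dot (vscale (-1) p) (vscale (-1) p) = dot p p) by (intros; unf; ring).
    assert (Hba : dot b a = 0) by (rewrite dot_comm; auto).
    assert (Hea : dot e a = 0) by (rewrite dot_comm; auto).
    assert (Heb : dot e b = 0) by (rewrite dot_comm; auto).
    assert (R0 : 0 <= rho) by (unfold rho; lra).
    repeat (rewrite tri_reg with (rho := rho);
      [| rewrite ?N, ?N', ?N''; unfold rho; try rewrite ?Hab, ?Hae, ?Hbe, ?Hba, ?Hea, ?Heb, ?Hbb, ?Hee; try lra ..]).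
    lra. }
  assert (HD : Dv v ^ 2 = 64 * rho ^ 3).
  { unfold Dv, dd1, dd2, dd3. rewrite V0, V1, V2, V3, V4, V5.
    assert (Id : det3 (vsub (vadd c a) (vsub c a)) (vsub (vadd c b) (vsub c b)) (vsub (vadd c e) (vsub c e)) ^ 2
      = 64 * (dot a a * dot b b * dot e e + 2 * dot a b * dot b e * dot a e
              - dot a a * dot b e ^ 2 - dot b b * dot a e ^ 2 - dot e e * dot a b ^ 2)) by (unf; ring).
    rewrite Id, Hab, Hae, Hbe, Hbb, Hee. unfold rho. ring. }
  rewrite Hs, vol_eq.
  assert (Rabs (Dv v) ^ 2 = Dv v ^ 2) by apply pow2_abs.
  assert (s3 : sqrt 3 * sqrt 3 = 3) by (apply sqrt_sqrt; lra).
  assert (0 < rho) by (unfold rho; lra).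
  replace ((Rabs (Dv v) / 6) ^ 2) with (Rabs (Dv v) ^ 2 / 36) by field.
  rewrite H, HD. field_simplify; [|lra]. 
  replace (sqrt 3 ^ 3) with (sqrt 3 * sqrt 3 * sqrt 3) by ring. rewrite s3. lra.
Qed.

Fixpoint wcomb (t : R) (w1 w2 : list R) : list R :=
  match w1, w2 with
  | a :: r1, b :: r2 => (t * a + (1 - t) * b) :: wcomb t r1 r2
  | _, _ => []
  end.

Lemma wcomb_props t l : 0 <= t <= 1 -> forall w1 w2,
  length w1 = length l -> length w2 = length l ->
  Forall (fun s => 0 <= s) w1 -> Forall (fun s => 0 <= s) w2 ->
  length (wcomb t w1 w2) = length l /\ Forall (fun s => 0 <= s) (wcomb t w1 w2) /\
  fold_right Rplus 0 (wcomb t w1 w2) = t * fold_right Rplus 0 w1 + (1 - t) * fold_right Rplus 0 w2 /\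
  lincomb (wcomb t w1 w2) l = vadd (vscale t (lincomb w1 l)) (vscale (1 - t) (lincomb w2 l)).
Proof.
  intros Ht. induction l as [|p l IH]; intros w1 w2 L1 L2 F1 F2.
  - destruct w1, w2; simpl in *; try discriminate. repeat split; auto; try lra.
    rewrite !lincomb_nil_l. apply pt_eq; unf; ring.
  - destruct w1 as [|a w1], w2 as [|b w2]; simpl in *; try discriminate.
    apply Forall_cons_iff in F1; destruct F1 as [Fa F1].
    apply Forall_cons_iff in F2; destruct F2 as [Fb F2].
    destruct (IH w1 w2 ltac:(lia) ltac:(lia) F1 F2) as [Q1 [Q2 [Q3 Q4]]].
    repeat split.
    + simpl; lia.
    + constructor; auto. nra.
    + rewrite Q3. ring.
    + rewrite !lincomb_cons, Q4. apply pt_eq; unf; ring.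
Qed.

Lemma hull_convex l p q t : in_hull l p -> in_hull l q -> 0 <= t <= 1 ->
  in_hull l (vadd (vscale t p) (vscale (1 - t) q)).
Proof.
  intros [w1 [L1 [F1 [S1 E1]]]] [w2 [L2 [F2 [S2 E2]]]] Ht.
  destruct (wcomb_props t l Ht w1 w2 L1 L2 F1 F2) as [Q1 [Q2 [Q3 Q4]]].
  exists (wcomb t w1 w2). repeat split; auto.
  - rewrite Q3, S1, S2. ring.
  - rewrite Q4, E1, E2. auto.
Qed.

Lemma verts_eq v : verts v = [v 0%nat; v 1%nat; v 2%nat; v 3%nat; v 4%nat; v 5%nat].
Proof. reflexivity. Qed.

Lemma vert_in_P v i : In i oct_idx -> polyP v (v i).
Proof. intros H. apply hull_mem. unfold verts. apply in_map. auto. Qed.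

Lemma mid_in_P v i j : In i oct_idx -> In j oct_idx -> polyP v (vscale (1/2) (vadd (v i) (v j))).
Proof.
  intros Hi Hj. replace (vscale (1/2) (vadd (v i) (v j))) with
    (vadd (vscale (1/2) (v i)) (vscale (1 - 1/2) (v j))) by (apply pt_eq; unf; field).
  apply hull_convex; try apply vert_in_P; auto; lra.
Qed.

Lemma not_interior_max (S : pt -> Prop) w M x :
  (forall y, S y -> dot w y <= M) -> dot w x = M -> 0 < dot w w -> ~ interior_pt S x.
Proof.
  intros Hle Hx Hw [eps [Heps Hb]].
  set (n := vnorm w). assert (np : 0 < n) by (apply sqrt_lt_R0; lra).
  assert (nn : n * n = dot w w) by apply vnorm_sq.
  set (k := eps / (2 * n)).
  assert (kp : 0 < k) by (unfold k; apply Rdiv_lt_0_compat; lra).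
  specialize (Hb (vadd x (vscale k w))).
  assert (E : vsub (vadd x (vscale k w)) x = vscale k w) by (apply pt_eq; unf; ring).
  rewrite E in Hb.
  assert (Nk : vnorm (vscale k w) = k * n).
  { unfold vnorm. rewrite dot_vscale_l, dot_vscale_r.
    replace (k * (k * dot w w)) with ((k * n) ^ 2) by (rewrite <- nn; ring).
    apply sqrt_pow2. nra. }
  rewrite Nk in Hb.
  assert (k * n < eps) by (unfold k; field_simplify; lra).
  specialize (Hle _ (Hb H)). rewrite dot_vadd_r, dot_vscale_r in Hle. nra.
Qed.

Lemma P_dot_le v w M : (forall i, In i oct_idx -> dot w (v i) <= M) ->
  forall y, polyP v y -> dot w y <= M.
Proof.
  intros H y Hy. apply (hull_dot_le w M (verts v)); auto.
  unfold verts. apply Forall_map, Forall_forall. auto.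
Qed.

Lemma flat_contra v w M : nonempty_interior v -> 0 < dot w w ->
  (forall i, In i oct_idx -> dot w (v i) = M) -> False.
Proof.
  intros [x Hx] Hw H.
  assert (Px : polyP v x).
  { destruct Hx as [eps [He Hb]]. apply Hb.
    replace (vsub x x) with origin by (apply pt_eq; unf; ring).
    unfold vnorm. replace (dot origin origin) with 0 by (unf; ring). rewrite sqrt_0. auto. }
  assert (L1 := P_dot_le v w M ltac:(intros i Hi; rewrite H; auto; lra)).
  assert (L2 := P_dot_le v (vscale (-1) w) (- M) ltac:(intros i Hi; rewrite dot_vscale_l, H; auto; lra)).
  specialize (L2 x Px). rewrite dot_vscale_l in L2.
  apply (not_interior_max (polyP v) w M x L1); auto.
  specialize (L1 x Px). lra.
Qed.

Lemma solve_mid (A B Y Z al be : R) : 0 < be -> al + be = 1 -> 1/2*(A+B) = al*A + be*Y + 0*Z ->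
  Y = (1/2 - al)/be * A + (1 - (1/2 - al)/be) * B.
Proof. intros Hb Hs H. assert (E : al = 1 - be) by lra. subst al.
  apply Rmult_eq_reg_l with be; [|lra]. field_simplify; [|lra]. lra. Qed.
Lemma solve_mid2 (A B Y Z al be : R) : 0 < be -> al + be = 1 -> 1/2*(A+B) = al*A + 0*Z + be*Y ->
  Y = (1/2 - al)/be * A + (1 - (1/2 - al)/be) * B.
Proof. intros Hb Hs H. apply (solve_mid A B Y Z al be); lra. Qed.

Lemma core v (Hint : nonempty_interior v) (Hvert : exactly_vertices v) (w : pt) (M : R) (a b y z : nat) :
  0 < dot w w ->
  (forall i, In i oct_idx -> dot w (v i) <= M) ->
  In a oct_idx -> In b oct_idx -> In y oct_idx -> In z oct_idx -> a <> y -> a <> z ->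
  dot w (v a) = M -> dot w (v b) = M ->
  (dot w (v y) = M -> dot w (v z) = M -> forall i, In i oct_idx -> dot w (v i) = M) ->
  ~ tri_hull (v a) (v y) (v z) (v b) ->
  tri_hull (v a) (v y) (v z) (vscale (1/2) (vadd (v a) (v b))) -> False.
Proof.
  intros Hw Hle Ia Ib Iy Iz Nay Naz Ha Hb Hall NB [al [be [ga [Pa [Pb [Pg [Ps [Ex [Ey Ez]]]]]]]]].
  destruct Hvert as [Inj Ext].
  assert (Phi : dot w (vscale (1/2) (vadd (v a) (v b))) =
      al * dot w (v a) + be * dot w (v y) + ga * dot w (v z)).
  { unf. unf. rewrite Ex, Ey, Ez. ring. }
  rewrite dot_vscale_r, dot_vadd_r, Ha, Hb in Phi.
  pose proof (Hle y Iy) as Ly. pose proof (Hle z Iz) as Lz.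
  assert (Key : be * (M - dot w (v y)) + ga * (M - dot w (v z)) = 0) by nra.
  destruct (Req_dec (dot w (v y)) M) as [Ey'|Ny]; destruct (Req_dec (dot w (v z)) M) as [Ez'|Nz].
  - exact (flat_contra v w M Hint Hw (Hall Ey' Ez')).
  -
    assert (G0 : ga = 0) by (assert (0 < M - dot w (v z)) by lra; nra).
    subst ga. unf.
    destruct (Rle_or_lt (1/2) al) as [Hal|Hal].
    + apply NB. exists (2 * al - 1), (2 * be), 0. repeat split; unf; lra.
    + (* y strictly between a and b *)
      assert (Hex : extreme_pt (polyP v) (v y)) by (apply Ext; eauto).
      destruct Hex as [_ Hex].
      assert (Bp : 0 < be) by lra.
      destruct (Hex (v a) (v b) ((1/2 - al) / be)) as [E1 _].
      * apply vert_in_P; auto.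
      * apply vert_in_P; auto.
      * split; apply Rdiv_lt_0_compat || idtac; try lra.
        apply (Rmult_lt_reg_r be); [lra|]. field_simplify; lra.
      * apply pt_eq; unf.
        -- eapply (solve_mid _ _ _ _ al be); [lra|lra|exact Ex].
        -- eapply (solve_mid _ _ _ _ al be); [lra|lra|exact Ey].
        -- eapply (solve_mid _ _ _ _ al be); [lra|lra|exact Ez].
      * apply Nay. apply Inj; auto.
  - assert (B0 : be = 0) by (assert (0 < M - dot w (v y)) by lra; nra).
    subst be. unf.
    destruct (Rle_or_lt (1/2) al) as [Hal|Hal].
    + apply NB. exists (2 * al - 1), 0, (2 * ga). repeat split; unf; lra.
    + assert (Hex : extreme_pt (polyP v) (v z)) by (apply Ext; eauto).
      destruct Hex as [_ Hex].
      assert (Gp : 0 < ga) by lra.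
      destruct (Hex (v a) (v b) ((1/2 - al) / ga)) as [E1 _].
      * apply vert_in_P; auto.
      * apply vert_in_P; auto.
      * split; apply Rdiv_lt_0_compat || idtac; try lra.
        apply (Rmult_lt_reg_r ga); [lra|]. field_simplify; lra.
      * apply pt_eq; unf.
        -- eapply (solve_mid2 _ _ _ _ al ga); [lra|lra|exact Ex].
        -- eapply (solve_mid2 _ _ _ _ al ga); [lra|lra|exact Ey].
        -- eapply (solve_mid2 _ _ _ _ al ga); [lra|lra|exact Ez].
      * apply Naz. apply Inj; auto.
  - assert (0 < M - dot w (v y)) by lra. assert (0 < M - dot w (v z)) by lra.
    assert (be = 0) by nra. assert (ga = 0) by nra. subst.
    apply NB. exists (2 * al - 1), 0, 0. repeat split; unf; lra.
Qed.

Lemma perp3 d1 d2 d3 : det3 d1 d2 d3 = 0 -> 0 < dot d1 d1 ->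
  exists w, 0 < dot w w /\ dot w d1 = 0 /\ dot w d2 = 0 /\ dot w d3 = 0.
Proof.
  intros D0 P1.
  destruct (Rlt_or_le 0 (dot (cross d1 d2) (cross d1 d2))) as [h|h].
  { exists (cross d1 d2). repeat split; auto; try (unf; ring). rewrite <- D0. unf; ring. }
  assert (Z12 : cross d1 d2 = origin) by (apply dot_zero; pose proof (dot_ge0 (cross d1 d2)); lra).
  destruct (Rlt_or_le 0 (dot (cross d1 d3) (cross d1 d3))) as [h'|h'].
  { exists (cross d1 d3). repeat split; auto; try (unf; ring).
    assert (E : dot (cross d1 d3) d2 = - det3 d1 d2 d3) by (unf; ring). lra. }
  assert (Z13 : cross d1 d3 = origin) by (apply dot_zero; pose proof (dot_ge0 (cross d1 d3)); lra).
  apply pt_eq_inv in Z12; apply pt_eq_inv in Z13. unf.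
  destruct d1 as [[x1 y1] z1]; destruct d2 as [[x2 y2] z2]; destruct d3 as [[x3 y3] z3]; cbn [fst snd] in *.
  destruct (Rlt_or_le 0 (z1 * z1 + y1 * y1)) as [hh|hh].
  - exists (0, z1, - y1). cbn [fst snd]. repeat split; try nra.
  - exists (- z1, 0, x1). cbn [fst snd]. repeat split; try nra.
Qed.

Lemma mid_comm p q : vscale (1/2) (vadd p q) = vscale (1/2) (vadd q p).
Proof. apply pt_eq; unf; ring. Qed.

Ltac solve_tri H := first [exact H | apply tri_perm12; exact H | apply tri_perm23; exact H
   | apply tri_perm12; apply tri_perm23; exact H | apply tri_perm23; apply tri_perm12; exact H
   | apply tri_perm12; apply tri_perm23; apply tri_perm12; exact H].

Lemma NB_lemma v : octahedral_boundary_triangulation v -> forall f g p, In f oct_faces -> In g oct_faces -> common_idx f g = [] ->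
     face_tri v f p -> face_tri v g p -> False.
Proof.
  intros [_ [_ H3]] f g p Hf Hg Hc T1 T2. assert (HH : in_hull (map v (common_idx f g)) p) by (apply H3; auto).
  rewrite Hc in HH. exact (hull_nil p HH).
Qed.

Ltac opp f := match f with
  | (0, 2, 4)%nat => constr:((1, 5, 3)%nat) | (1, 5, 3)%nat => constr:((0, 2, 4)%nat)
  | (0, 3, 5)%nat => constr:((1, 4, 2)%nat) | (1, 4, 2)%nat => constr:((0, 3, 5)%nat)
  | (1, 2, 5)%nat => constr:((0, 4, 3)%nat) | (0, 4, 3)%nat => constr:((1, 2, 5)%nat)
  | (1, 3, 4)%nat => constr:((0, 5, 2)%nat) | (0, 5, 2)%nat => constr:((1, 3, 4)%nat) end.

Ltac core_at a' b' y z :=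
    solve [ match goal with Hi : nonempty_interior _ |- _ => match goal with Hv : exactly_vertices _ |- _ =>
       eapply (core _ Hi Hv _ _ a' b' y z) end end; 
      [ eassumption | eassumption | simpl; tauto | simpl; tauto | simpl; tauto | simpl; tauto
      | lia | lia | lra | lra
      | let Hy := fresh in let Hz := fresh in let i := fresh in let Hi := fresh in
        intros Hy Hz i Hi; simpl in Hi; repeat destruct Hi as [<-|Hi]; [lra ..|contradiction]
      | let T := fresh in intro T; match goal with Hm : face_tri _ ?f _ |- _ =>
          let g := opp f in
          match goal with Ht : octahedral_boundary_triangulation ?v |- _ => 
            apply (NB_lemma v Ht f g (v b')); 
            [simpl; tauto | simpl; tauto | reflexivity 
            | unfold face_tri; simpl; apply in_hull3; solve_tri T | apply hull_mem; simpl; tauto] end end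
      | match goal with Hm : tri_hull _ _ _ _ |- _ => first [solve_tri Hm | rewrite mid_comm; solve_tri Hm] end ] ].
Ltac face_cases a b :=
    match goal with Hf : In ?f oct_faces |- _ =>
      simpl in Hf; repeat destruct Hf as [<-|Hf]; try contradiction;
      match goal with Hm : face_tri _ (?i, ?j, ?k) _ |- _ =>
        pose proof Hm as Hm'; unfold face_tri in Hm'; simpl in Hm'; apply in_hull3 in Hm';
        first [ core_at a b j k | core_at b a j k | core_at a b i k | core_at b a i k
              | core_at a b i j | core_at b a i j ] end end.

Lemma D_nonzero v : nonempty_interior v -> exactly_vertices v -> octahedral_boundary_triangulation v ->
  Dv v <> 0.
Proof.
  intros Hint Hvert Htri D0.
  pose proof Hvert as [Inj Ext]. pose proof Htri as [Hnd [Hbd H3]].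
  assert (P1 : 0 < dot (dd1 v) (dd1 v)).
  { apply vsub_pos. intro E. apply Inj in E; simpl; auto; discriminate. }
  destruct (perp3 _ _ _ D0 P1) as [w [Hw [W1 [W2 W3]]]].
  unfold dd1, dd2, dd3 in *. rewrite dot_vsub_r in W1, W2, W3.
  assert (Pm : forall a b M, In a oct_idx -> In b oct_idx ->
     (forall i, In i oct_idx -> dot w (v i) <= M) -> dot w (v a) = M -> dot w (v b) = M ->
     exists f, In f oct_faces /\ face_tri v f (vscale (1/2) (vadd (v a) (v b)))).
  { intros a b M Ia Ib Hle Ha Hb. apply Hbd. split.
    - apply mid_in_P; auto.
    - apply (not_interior_max _ w M); auto.
      + apply P_dot_le; auto.
      + rewrite dot_vscale_r, dot_vadd_r. lra. }
  assert (W1' : dot w (v 1%nat) = dot w (v 0%nat)) by lra.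
  assert (W2' : dot w (v 3%nat) = dot w (v 2%nat)) by lra.
  assert (W3' : dot w (v 5%nat) = dot w (v 4%nat)) by lra.
  clear W1 W2 W3.
  Ltac hle := let i := fresh in let Hi := fresh in intros i Hi; simpl in Hi; repeat destruct Hi as [<-|Hi]; [lra ..|contradiction].
  destruct (Rle_dec (dot w (v 2%nat)) (dot w (v 0%nat))) as [c20|c20].
  - destruct (Rle_dec (dot w (v 4%nat)) (dot w (v 0%nat))) as [c40|c40].
    + assert (Hle : forall i, In i oct_idx -> dot w (v i) <= dot w (v 0%nat)) by hle.
      destruct (Pm 0%nat 1%nat (dot w (v 0%nat)) ltac:(simpl; tauto) ltac:(simpl; tauto) Hle ltac:(lra) ltac:(lra)) as [f [Hf Hm]].
      face_cases 0%nat 1%nat.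
    + assert (Hle : forall i, In i oct_idx -> dot w (v i) <= dot w (v 4%nat)) by hle.
      destruct (Pm 4%nat 5%nat (dot w (v 4%nat)) ltac:(simpl; tauto) ltac:(simpl; tauto) Hle ltac:(lra) ltac:(lra)) as [f [Hf Hm]].
      face_cases 4%nat 5%nat.
  - destruct (Rle_dec (dot w (v 4%nat)) (dot w (v 2%nat))) as [c42|c42].
    + assert (Hle : forall i, In i oct_idx -> dot w (v i) <= dot w (v 2%nat)) by hle.
      destruct (Pm 2%nat 3%nat (dot w (v 2%nat)) ltac:(simpl; tauto) ltac:(simpl; tauto) Hle ltac:(lra) ltac:(lra)) as [f [Hf Hm]].
      face_cases 2%nat 3%nat.
    + assert (Hle : forall i, In i oct_idx -> dot w (v i) <= dot w (v 4%nat)) by hle.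
      destruct (Pm 4%nat 5%nat (dot w (v 4%nat)) ltac:(simpl; tauto) ltac:(simpl; tauto) Hle ltac:(lra) ltac:(lra)) as [f [Hf Hm]].
      face_cases 4%nat 5%nat.
Qed.

Section Reg.
Variables (c u1 u2 u3 : pt) (r : R).
Hypothesis rp : 0 < r.
Hypothesis U11 : dot u1 u1 = 1.
Hypothesis U22 : dot u2 u2 = 1.
Hypothesis U33 : dot u3 u3 = 1.
Hypothesis U12 : dot u1 u2 = 0.
Hypothesis U13 : dot u1 u3 = 0.
Hypothesis U23 : dot u2 u3 = 0.

Lemma uparseval x y : dot x y = dot x u1 * dot y u1 + dot x u2 * dot y u2 + dot x u3 * dot y u3.
Proof.
  pose proof (frame_parseval u1 u2 U11 U22 U12) as P.
  rewrite (P x y).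
  pose proof (P u3 u3) as P33. rewrite U33, (dot_comm u3 u1), (dot_comm u3 u2), U13, U23 in P33.
  pose proof (P x u3) as Px. rewrite (dot_comm u3 u1), (dot_comm u3 u2), U13, U23 in Px.
  pose proof (P y u3) as Py. rewrite (dot_comm u3 u1), (dot_comm u3 u2), U13, U23 in Py.
  rewrite Px, Py. set (s := dot u3 (cross u1 u2)) in *. set (a := dot x (cross u1 u2)). set (b := dot y (cross u1 u2)).
  replace ((dot x u1 * 0 + dot x u2 * 0 + a * s) * (dot y u1 * 0 + dot y u2 * 0 + b * s)) with (a * b * (s * s)) by ring.
  replace (s * s) with 1 by lra. ring.
Qed.

Lemma uexpand x : x = vadd (vadd (vscale (dot x u1) u1) (vscale (dot x u2) u2)) (vscale (dot x u3) u3).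
Proof.
  set (z := vsub x (vadd (vadd (vscale (dot x u1) u1) (vscale (dot x u2) u2)) (vscale (dot x u3) u3))).
  assert (Z1 : dot z u1 = 0).
  { unfold z. rewrite dot_vsub_l, !dot_vadd_l, !dot_vscale_l, (dot_comm u2 u1), (dot_comm u3 u1), U11, U12, U13. ring. }
  assert (Z2 : dot z u2 = 0).
  { unfold z. rewrite dot_vsub_l, !dot_vadd_l, !dot_vscale_l, (dot_comm u3 u2), U12, U22, U23. ring. }
  assert (Z3 : dot z u3 = 0).
  { unfold z. rewrite dot_vsub_l, !dot_vadd_l, !dot_vscale_l, U13, U23, U33. ring. }
  assert (Z : z = origin) by (apply dot_zero; rewrite uparseval, Z1, Z2, Z3; ring).
  apply pt_eq_inv in Z. unfold z in Z. destruct Z as [Z4 [Z5 Z6]]. apply pt_eq; unf; lra.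
Qed.

Definition Lreg := [vadd c (vscale r u1); vsub c (vscale r u1); vadd c (vscale r u2);
                    vsub c (vscale r u2); vadd c (vscale r u3); vsub c (vscale r u3)].

Lemma comb6 (y c0 x1 x2 x3 t1 t2 t3 : R) : y - c0 = t1 * x1 + t2 * x2 + t3 * x3 ->
  y = (1/6 + t1/(2*r)) * (c0 + r * x1) + ((1/6 - t1/(2*r)) * (c0 - r * x1) +
      ((1/6 + t2/(2*r)) * (c0 + r * x2) + ((1/6 - t2/(2*r)) * (c0 - r * x2) +
      ((1/6 + t3/(2*r)) * (c0 + r * x3) + ((1/6 - t3/(2*r)) * (c0 - r * x3) + 0))))).
Proof. intros E. replace y with (c0 + t1 * x1 + t2 * x2 + t3 * x3) by lra. field. lra. Qed.

Lemma c_interior : interior_pt (in_hull Lreg) c.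
Proof.
  exists (r / 3). split; [lra|]. intros y Hy.
  pose proof (uexpand (vsub y c)) as Ex.
  set (t1 := dot (vsub y c) u1) in *. set (t2 := dot (vsub y c) u2) in *. set (t3 := dot (vsub y c) u3) in *.
  assert (Hn : dot (vsub y c) (vsub y c) < r * r / 9).
  { rewrite <- vnorm_sq. pose proof (vnorm_ge0 (vsub y c)). nra. }
  rewrite uparseval in Hn. fold t1 t2 t3 in Hn.
  assert (B1 : - (r/3) < t1 < r/3) by (split; nra).
  assert (B2 : - (r/3) < t2 < r/3) by (split; nra).
  assert (B3 : - (r/3) < t3 < r/3) by (split; nra).
  clearbody t1 t2 t3.
  exists [1/6 + t1/(2*r); 1/6 - t1/(2*r); 1/6 + t2/(2*r); 1/6 - t2/(2*r); 1/6 + t3/(2*r); 1/6 - t3/(2*r)].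
  assert (K : forall t, - (r/3) < t < r/3 -> 0 <= 1/6 + t/(2*r) /\ 0 <= 1/6 - t/(2*r)).
  { intros t Ht. split; apply Rmult_le_reg_r with (2 * r); try lra; field_simplify; lra. }
  destruct (K t1 B1), (K t2 B2), (K t3 B3).
  split; [reflexivity|]. split.
  { repeat (constructor; [assumption|]). constructor. }
  split; [simpl; field; lra|].
  apply pt_eq_inv in Ex. destruct Ex as [E1 [E2 E3]].
  unfold lincomb, Lreg; simpl. apply pt_eq; unf; apply comb6; lra.
Qed.

Definition uu (k : nat) : pt := match k with 1%nat => u1 | 2%nat => u2 | _ => u3 end.

Lemma uu_dot k l : (k = 1 \/ k = 2 \/ k = 3)%nat -> (l = 1 \/ l = 2 \/ l = 3)%nat ->
  dot (uu k) (uu l) = if Nat.eqb k l then 1 else 0.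
Proof.
  intros [Hk|[Hk|Hk]] [Hl|[Hl|Hl]]; subst k l; simpl; auto; rewrite dot_comm; auto.
Qed.

Lemma inL_rep x : In x Lreg -> exists k s, (k = 1 \/ k = 2 \/ k = 3)%nat /\ (s = 1 \/ s = -1) /\
   x = vadd c (vscale (s * r) (uu k)).
Proof.
  unfold Lreg; simpl. intros [E|[E|[E|[E|[E|[E|[]]]]]]]; subst x.
  - exists 1%nat, 1. repeat split; auto. apply pt_eq; unfold uu; unf; ring.
  - exists 1%nat, (-1). repeat split; auto. apply pt_eq; unfold uu; unf; ring.
  - exists 2%nat, 1. repeat split; auto. apply pt_eq; unfold uu; unf; ring.
  - exists 2%nat, (-1). repeat split; auto. apply pt_eq; unfold uu; unf; ring.
  - exists 3%nat, 1. repeat split; auto. apply pt_eq; unfold uu; unf; ring.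
  - exists 3%nat, (-1). repeat split; auto. apply pt_eq; unfold uu; unf; ring.
Qed.

End Reg.

Lemma three_colors (a b c d : nat) : ((a = 1 \/ a = 2 \/ a = 3) -> (b = 1 \/ b = 2 \/ b = 3) ->
  (c = 1 \/ c = 2 \/ c = 3) -> (d = 1 \/ d = 2 \/ d = 3) -> a <> b -> a <> c -> b <> c -> d <> b -> d <> c -> d = a)%nat.
Proof. intros [ -> | [ -> | -> ] ] [ -> | [ -> | -> ] ] [ -> | [ -> | -> ] ] [ -> | [ -> | -> ] ]; intros; congruence. Qed.

Ltac inoct := solve [unfold oct_idx, oct_faces; simpl; repeat (first [left; reflexivity | right])].

Ltac adj v Adj i j f o Si Sj Vi Vj := eapply (Adj i j f); [lia | inoct | inoct | inoct
   | unfold face_tri; simpl; apply in_hull3; let T := fresh in pose proof (tri_mid12 (v i) (v j) (v o)) as T; solve_tri T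
   | exact Si | exact Sj | exact Vi | exact Vj].

Lemma regular_RegP v : nonempty_interior v -> exactly_vertices v -> octahedral_boundary_triangulation v ->
  is_regular_octahedron (polyP v) -> RegP v.
Proof.
  intros Hint Hvert Htri [c [u1 [u2 [u3 [r [rp [U11 [U22 [U33 [U12 [U13 [U23 Hiff]]]]]]]]]]]].
  destruct Hvert as [Inj Ext]. pose proof Htri as [Hnd [Hbd H3]].
  assert (Ci : interior_pt (polyP v) c).
  { destruct (c_interior c u1 u2 u3 r rp U11 U22 U33 U12 U13 U23) as [eps [he hb]].
    exists eps; split; auto. intros y Hy. apply Hiff. apply hb; auto. }
  assert (Rep : forall i, In i oct_idx -> exists k s, (k = 1 \/ k = 2 \/ k = 3)%nat /\ (s = 1 \/ s = -1) /\
      v i = vadd c (vscale (s * r) (uu u1 u2 u3 k))).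
  { intros i Hi. apply inL_rep. apply hull_extreme_in.
    - apply Hiff. apply vert_in_P. auto.
    - intros a b t Ha Hb Ht E.
      assert (X : extreme_pt (polyP v) (v i)) by (apply Ext; eauto).
      destruct X as [_ X]. apply (X a b t); auto; apply Hiff; auto. }
  assert (Adj : forall i j f k s s', i <> j -> In i oct_idx -> In j oct_idx -> In f oct_faces ->
      face_tri v f (vscale (1/2) (vadd (v i) (v j))) -> (s = 1 \/ s = -1) -> (s' = 1 \/ s' = -1) ->
      v i = vadd c (vscale (s * r) (uu u1 u2 u3 k)) -> v j = vadd c (vscale (s' * r) (uu u1 u2 u3 k)) -> False).
  { intros i j f k s s' Nij Ii Ij If Hm Hs Hs' Vi Vj.
    destruct Hs as [->| ->]; destruct Hs' as [->| ->].
    - apply Nij, Inj; auto. rewrite Vi, Vj; auto.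
    - assert (M : vscale (1/2) (vadd (v i) (v j)) = c) by (rewrite Vi, Vj; apply pt_eq; unf; field).
      rewrite M in Hm. assert (Bc : boundary_pt (polyP v) c) by (apply Hbd; exists f; split; auto).
      destruct Bc as [_ Bc]. exact (Bc Ci).
    - assert (M : vscale (1/2) (vadd (v i) (v j)) = c) by (rewrite Vi, Vj; apply pt_eq; unf; field).
      rewrite M in Hm. assert (Bc : boundary_pt (polyP v) c) by (apply Hbd; exists f; split; auto).
      destruct Bc as [_ Bc]. exact (Bc Ci).
    - apply Nij, Inj; auto. rewrite Vi, Vj; auto. }
  destruct (Rep 0%nat ltac:(inoct)) as [k0 [s0 [K0 [S0 V0]]]].
  destruct (Rep 1%nat ltac:(inoct)) as [k1 [s1 [K1 [S1 V1]]]].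
  destruct (Rep 2%nat ltac:(inoct)) as [k2 [s2 [K2 [S2 V2]]]].
  destruct (Rep 3%nat ltac:(inoct)) as [k3 [s3 [K3 [S3 V3]]]].
  destruct (Rep 4%nat ltac:(inoct)) as [k4 [s4 [K4 [S4 V4]]]].
  destruct (Rep 5%nat ltac:(inoct)) as [k5 [s5 [K5 [S5 V5]]]].
  assert (N02 : k0 <> k2).
  { intro E. rewrite E in V0. adj v Adj 0%nat 2%nat (0,2,4)%nat 4%nat S0 S2 V0 V2. }
  assert (N04 : k0 <> k4).
  { intro E. rewrite E in V0. adj v Adj 0%nat 4%nat (0,2,4)%nat 2%nat S0 S4 V0 V4. }
  assert (N24 : k2 <> k4).
  { intro E. rewrite E in V2. adj v Adj 2%nat 4%nat (0,2,4)%nat 0%nat S2 S4 V2 V4. }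
  assert (N12 : k1 <> k2).
  { intro E. rewrite E in V1. adj v Adj 1%nat 2%nat (1,4,2)%nat 4%nat S1 S2 V1 V2. }
  assert (N14 : k1 <> k4).
  { intro E. rewrite E in V1. adj v Adj 1%nat 4%nat (1,4,2)%nat 2%nat S1 S4 V1 V4. }
  assert (N03 : k0 <> k3).
  { intro E. rewrite E in V0. adj v Adj 0%nat 3%nat (0,4,3)%nat 4%nat S0 S3 V0 V3. }
  assert (N34 : k3 <> k4).
  { intro E. rewrite E in V3. adj v Adj 3%nat 4%nat (0,4,3)%nat 0%nat S3 S4 V3 V4. }
  assert (N05 : k0 <> k5).
  { intro E. rewrite E in V0. adj v Adj 0%nat 5%nat (0,5,2)%nat 2%nat S0 S5 V0 V5. }
  assert (N25 : k2 <> k5).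
  { intro E. rewrite E in V2. adj v Adj 2%nat 5%nat (0,5,2)%nat 0%nat S2 S5 V2 V5. }
  assert (k1 = k0) by (apply three_colors with k2 k4; auto).
  assert (k3 = k2) by (apply three_colors with k0 k4; auto).
  assert (k5 = k4) by (apply three_colors with k0 k2; auto).
  subst k1 k3 k5.
  assert (s1 = - s0).
  { destruct S0 as [-> | ->]; destruct S1 as [-> | ->]; try lra; exfalso;
    assert (E : (1 = 0)%nat) by (apply Inj; [inoct|inoct|rewrite V1, V0; reflexivity]); discriminate. }
  assert (s3 = - s2).
  { destruct S2 as [-> | ->]; destruct S3 as [-> | ->]; try lra; exfalso;
    assert (E : (3 = 2)%nat) by (apply Inj; [inoct|inoct|rewrite V3, V2; reflexivity]); discriminate. }
  assert (s5 = - s4).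
  { destruct S4 as [-> | ->]; destruct S5 as [-> | ->]; try lra; exfalso;
    assert (E : (5 = 4)%nat) by (apply Inj; [inoct|inoct|rewrite V5, V4; reflexivity]); discriminate. }
  subst s1 s3 s5.
  exists c, (vscale (s0 * r) (uu u1 u2 u3 k0)), (vscale (s2 * r) (uu u1 u2 u3 k2)), (vscale (s4 * r) (uu u1 u2 u3 k4)).
  assert (SS : forall s, (s = 1 \/ s = -1) -> s * s = 1) by (intros s [-> | ->]; ring).
  pose proof (SS s0 S0) as Q0. pose proof (SS s2 S2) as Q2. pose proof (SS s4 S4) as Q4.
  rewrite !dot_vscale_l, !dot_vscale_r.
  rewrite !uu_dot; auto.
  replace (Nat.eqb k0 k2) with false by (symmetry; apply Nat.eqb_neq; auto).
  replace (Nat.eqb k0 k4) with false by (symmetry; apply Nat.eqb_neq; auto).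
  replace (Nat.eqb k2 k4) with false by (symmetry; apply Nat.eqb_neq; auto).
  rewrite !Nat.eqb_refl.
  assert (r * r > 0) by nra.
  repeat split; try (apply pt_eq; rewrite ?V0, ?V1, ?V2, ?V3, ?V4, ?V5; unf; ring); try ring.
  - transitivity (s2 * s2 * (r * r)); [ring|]. rewrite Q2. transitivity (s0 * s0 * (r * r)); [|ring]. rewrite Q0. ring.
  - transitivity (s4 * s4 * (r * r)); [ring|]. rewrite Q4. transitivity (s0 * s0 * (r * r)); [|ring]. rewrite Q0. ring.
  - replace (s0 * r * (s0 * r * 1)) with (s0 * s0 * (r * r)) by ring. rewrite Q0. lra.
Qed.

Lemma amgm3 x y z : 0 <= x -> 0 <= y -> 0 <= z -> 27 * (x * y * z) <= (x + y + z) ^ 3.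
Proof.
  intros. assert (Id : (x + y + z) ^ 3 - 27 * (x * y * z) =
     (x + y + z) * ((x - y) ^ 2 + (y - z) ^ 2 + (z - x) ^ 2) / 2
     + 3 * (x * (y - z) ^ 2 + y * (z - x) ^ 2 + z * (x - y) ^ 2)) by field.
  assert (0 <= (x + y + z) * ((x - y) ^ 2 + (y - z) ^ 2 + (z - x) ^ 2)) by
    (apply Rmult_le_pos; [lra| pose proof (pow2_ge_0 (x-y)); pose proof (pow2_ge_0 (y-z)); pose proof (pow2_ge_0 (z-x)); lra]).
  assert (0 <= x * (y - z) ^ 2) by (apply Rmult_le_pos; [lra| pose proof (pow2_ge_0 (x-y)); pose proof (pow2_ge_0 (y-z)); pose proof (pow2_ge_0 (z-x)); lra]).
  assert (0 <= y * (z - x) ^ 2) by (apply Rmult_le_pos; [lra| pose proof (pow2_ge_0 (x-y)); pose proof (pow2_ge_0 (y-z)); pose proof (pow2_ge_0 (z-x)); lra]).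
  assert (0 <= z * (x - y) ^ 2) by (apply Rmult_le_pos; [lra| pose proof (pow2_ge_0 (x-y)); pose proof (pow2_ge_0 (y-z)); pose proof (pow2_ge_0 (z-x)); lra]).
  lra.
Qed.

Lemma cube_le a b : 0 <= a -> a <= b -> a ^ 3 <= b ^ 3.
Proof. intros. apply pow_incr; lra. Qed.

Lemma cube_inj a b : 0 <= a -> 0 <= b -> a ^ 3 = b ^ 3 -> a = b.
Proof.
  intros Ha Hb E. destruct (Rtotal_order a b) as [h|[h|h]]; auto.
  - assert (0 < (b - a) * (b*b + a*b + a*a)) by (apply Rmult_lt_0_compat; nra).
    assert (b ^ 3 - a ^ 3 = (b - a) * (b*b + a*b + a*a)) by ring. lra.
  - assert (0 < (a - b) * (b*b + a*b + a*a)) by (apply Rmult_lt_0_compat; nra).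
    assert (a ^ 3 - b ^ 3 = (a - b) * (b*b + a*b + a*a)) by ring. lra.
Qed.

Lemma nondeg v : octahedral_boundary_triangulation v -> forall a b c, In (a, b, c) oct_faces ->
  0 < dot (Nf v a b c) (Nf v a b c).
Proof. intros [Hnd _] a b c Hf. apply dot_pos. exact (Hnd _ Hf). Qed.

Theorem proposition3 (v : nat -> pt)
  (Hint : nonempty_interior v)
  (Hvert : exactly_vertices v)
  (Htri : octahedral_boundary_triangulation v) :
  surf_area v ^ 3 / volume v ^ 2 >= 108 * sqrt 3 /\
  (surf_area v ^ 3 / volume v ^ 2 = 108 * sqrt 3 <-> is_regular_octahedron (polyP v)).
Proof.
  pose proof (D_nonzero v Hint Hvert Htri) as DN.
  assert (Dp : 0 < det3 (cc1 v) (cc2 v) (cc3 v)) by (rewrite detc; nra).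
  destruct (GS _ _ _ Dp) as [e1 [e2 [H11 [H22 [H12 [X1 [X2 [X3 Xp]]]]]]]].
  rewrite detc in Xp.
  pose proof (ineq_T e1 e2 H11 H22 H12 v) as IT. unfold Tv in IT.
  set (x1 := dot (cc1 v) e1) in *. set (x2 := dot (cc2 v) e2) in *. set (x3 := dot (cc3 v) (cross e1 e2)) in *.
  set (S := surf_area v) in *. set (s := sqrt 3).
  assert (ss : s * s = 3) by (apply sqrt_sqrt; lra).
  assert (sp : 0 < s) by (apply sqrt_lt_R0; lra).
  assert (AM := amgm3 x1 x2 x3 ltac:(lra) ltac:(lra) ltac:(lra)).
  assert (C1 := cube_le (x1 + x2 + x3) (s * S) ltac:(lra) IT).
  assert (V2 : volume v ^ 2 = Dv v ^ 2 / 36) by (rewrite vol_eq; rewrite <- (pow2_abs (Dv v)); field).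
  assert (D2p : 0 < Dv v ^ 2) by nra.
  assert (s3 : (s * S) ^ 3 = 3 * s * S ^ 3) by (replace ((s * S) ^ 3) with (s * s * s * S ^ 3) by ring; rewrite ss; ring).
  assert (Ratio : S ^ 3 / volume v ^ 2 = 36 * S ^ 3 / Dv v ^ 2) by (rewrite V2; field; lra).
  assert (Main : 3 * s * Dv v ^ 2 <= S ^ 3).
  { assert (3 * s * S ^ 3 >= 27 * Dv v ^ 2) by lra.
    apply Rmult_le_reg_l with (3 * s); [lra|]. replace (3 * s * (3 * s * Dv v ^ 2)) with (9 * (s * s) * Dv v ^ 2) by ring.
    rewrite ss. lra. }
  split.
  - rewrite Ratio. apply Rle_ge. apply Rmult_le_reg_r with (Dv v ^ 2); [lra|].
    field_simplify; [|lra]. lra.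
  - split.
    + intros Eq. rewrite Ratio in Eq.
      assert (SE : S ^ 3 = 3 * s * Dv v ^ 2).
      { apply Rmult_eq_reg_r with (36 / Dv v ^ 2); [|apply Rgt_not_eq; apply Rdiv_lt_0_compat; lra].
        replace (S ^ 3 * (36 / Dv v ^ 2)) with (36 * S ^ 3 / Dv v ^ 2) by (field; lra). rewrite Eq. field. lra. }
      assert (T3 : (x1 + x2 + x3) ^ 3 = (s * S) ^ 3).
      { rewrite s3, SE. replace (3 * s * (3 * s * Dv v ^ 2)) with (9 * (s * s) * Dv v ^ 2) by ring. rewrite ss.
        assert ((x1 + x2 + x3) ^ 3 <= 27 * Dv v ^ 2) by (rewrite s3, SE in C1; replace (3 * s * (3 * s * Dv v ^ 2)) with (9 * (s * s) * Dv v ^ 2) in C1 by ring; rewrite ss in C1; lra).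
        lra. }
      assert (Sge : 0 <= S).
      { unfold S; rewrite surf_eq.
         pose proof (vnorm_ge0 (Nf v 0 2 4)); pose proof (vnorm_ge0 (Nf v 0 3 5)); pose proof (vnorm_ge0 (Nf v 1 2 5));
         pose proof (vnorm_ge0 (Nf v 1 3 4)); pose proof (vnorm_ge0 (Nf v 0 5 2)); pose proof (vnorm_ge0 (Nf v 0 4 3));
         pose proof (vnorm_ge0 (Nf v 1 4 2)); pose proof (vnorm_ge0 (Nf v 1 5 3)); lra. }
      apply cube_inj in T3; [|lra|apply Rmult_le_pos; lra].
      assert (ET := eq_T e1 e2 H11 H22 H12 v ltac:(exact T3)).
      simpl in ET. destruct ET as [E1 [E2 [E3 [E4 [E5 [E6 [E7 E8]]]]]]].
      assert (o : 1 * 1 = 1) by ring. assert (m : -1 * -1 = 1) by ring.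
      Ltac fp e1 e2 H11 H22 H12 Htri E :=
        eapply (face_perp e1 e2 H11 H22 H12); [ | | | apply nondeg; [exact Htri | unfold oct_faces; simpl; repeat (first [left; reflexivity | right])] | exact E]; ring.
      apply reg_is_regular.
      apply (coords_reg e1 e2 H11 H22 H12 v).
      * fp e1 e2 H11 H22 H12 Htri E1.
      * fp e1 e2 H11 H22 H12 Htri E2.
      * fp e1 e2 H11 H22 H12 Htri E3.
      * fp e1 e2 H11 H22 H12 Htri E4.
      * fp e1 e2 H11 H22 H12 Htri E5.
      * fp e1 e2 H11 H22 H12 Htri E6.
      * fp e1 e2 H11 H22 H12 Htri E7.
      * fp e1 e2 H11 H22 H12 Htri E8.
      * intro E. destruct Hvert as [Inj _]. assert (Z : (0 = 1)%nat) by (apply Inj; [unfold oct_idx; simpl; auto | unfold oct_idx; simpl; auto | exact E]). discriminate.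
    + intros Hreg. apply reg_ratio. apply regular_RegP; auto.
Qed.
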